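(* In the setting of the context (with $\alpha\in(1,2]$), for every $n\ge1$, \[\int_\Omega P'(0)1\,d\mu=0\quad\text{and}\quad\int_\Omega (Q(0)^n)'1\,d\mu=\int_\Omega Q(0)^{n-1}Q'(0)1\,d\mu=0,\] where $(Q(0)^n)'$ denotes the derivative of $t\mapsto Q(t)^n$ at $t=0$.
   Context: $T:\Omega\to\Omega$ preserves the probability $\mu$; $v:\Omega\to\mathbb R$ measurable, $\int v^2d\mu=\infty$, $\int_\Omega v\,d\mu=0$; $\alpha\in(1,2]$; $\ell$ slowly varying, $\hat\ell(x)=1+\int_1^{1+x}\ell(u)u^{-1}du$, $\ell_0=\ell$ for $\alpha<2$, $\ell_0=\hat\ell$ for $\alpha=2$. (H1): $\mu(v>x)=p\ell(x)x^{-\alpha}(1+o(1))$, $\mu(v\le-x)=q\ell(x)x^{-\alpha}(1+o(1))$, $p+q=1$. $R$ transfer operator ($\int Rf\,g\,d\mu=\int f\,g\circ T\,d\mu$), $R(t)f=R(e^{itv}f)$ on a Banach space $\mathcal B\subset L^\infty$ containing constants with $|\phi|_\infty\le\|\phi\|$; (H2): there exist $\epsilon_1,C>0$ such that for $|t|,|h|<\epsilon_1$, $\|R(t)\|,\|R'(t)\|\le C$, $\|R(t+h)-R(t)-hR'(0)\|\le C|h|(|t|^{\alpha'-1}+|h|^{\alpha'-1})$ for any $\alpha'\in(1,\alpha)$, $\|R'(t+h)-R'(t)\|\le C|h|^{\alpha-1}\ell_0(1/|h|)$. (H3): $1$ is a simple eigenvalue of $R$ on $\mathcal B$, rest of spectrum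 in a disk of radius $<1$. For small $|t|$, $R(t)=\lambda(t)P(t)+Q(t)$ where $\lambda(t)$ is the continuous family of simple eigenvalues with $\lambda(0)=1$, $P(t)$ the corresponding spectral projection and $Q(t)=R(t)(I-P(t))$; primes denote operator-norm derivatives in $t$. *)

(* Defs.v *)
From HB Require Import structures.
From mathcomp Require Import all_boot all_order all_algebra.
From mathcomp Require Import all_classical all_reals all_analysis.
Import Order.TTheory GRing.Theory Num.Theory.
From mathcomp Require Export complex.
Import numFieldNormedType.Exports.

Set Implicit Arguments.
Unset Strict Implicit.
Unset Printing Implicit Defensive.

Local Open Scope ring_scope.
Local Open Scope classical_set_scope.

Definition cabs {R : realType} (z : R[i]) : R := complex.Re `|z|.

Definition cexpi {R : realType} (x : R) : R[i] := (cos x +i* sin x)%C.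

Section CMeasure.
Context {R : realType} {d : measure_display} {T : measurableType d}.
Variable mu : {measure set T -> \bar R}.

Definition cmeasurable (f : T -> R[i]) :=
  measurable_fun setT (fun x => complex.Re (f x)) /\
  measurable_fun setT (fun x => complex.Im (f x)).

Definition cintegrable (f : T -> R[i]) :=
  mu.-integrable setT (fun x => (complex.Re (f x))%:E) /\
  mu.-integrable setT (fun x => (complex.Im (f x))%:E).

Definition cint (f : T -> R[i]) : R[i] :=
  (Rintegral mu setT (fun x => complex.Re (f x)) +i*
   Rintegral mu setT (fun x => complex.Im (f x)))%C.

Definition measure_preserving (Tm : T -> T) :=
  measurable_fun setT Tm /\
  forall A, measurable A -> mu (Tm @^-1` A) = mu A.

Definition transfer_op (Tm : T -> T)
    (Rop : (T -> R[i]) -> (T -> R[i])) :=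
  (forall f, cintegrable f -> cintegrable (Rop f)) /\
  (forall f g, cintegrable f -> cmeasurable g ->
     (exists M, forall x, cabs (g x) <= M) ->
     cint (fun x => Rop f x * g x) = cint (fun x => f x * g (Tm x))).

End CMeasure.

Definition slowly_varying {R : realType} (ell : R -> R) :=
  measurable_fun setT ell /\ (forall x, 0 < x -> 0 < ell x) /\
  forall c : R, 0 < c -> ell (c * x) / ell x @[x --> +oo] --> (1 : R).

Definition ellhat {R : realType} (ell : R -> R) (x : R) : R :=
  1 + Rintegral (@lebesgue_measure R) `[1, 1 + x] (fun u => ell u / u).

Definition ell0 {R : realType} (alpha : R) (ell : R -> R) : R -> R :=
  if alpha < 2 then ell else ellhat ell.

Definition H1 {R : realType} {d : measure_display} {T : measurableType d}
    (mu : {measure set T -> \bar R}) (v : T -> R) (alpha : R) (ell : R -> R)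
    (p q : R) :=
  0 <= p /\ 0 <= q /\ p + q = 1 /\
  ((fine (mu [set w | x < v w]) - p * ell x * x `^ (- alpha))
      / (ell x * x `^ (- alpha)) @[x --> +oo] --> (0 : R)) /\
  ((fine (mu [set w | v w <= - x]) - q * ell x * x `^ (- alpha))
      / (ell x * x `^ (- alpha)) @[x --> +oo] --> (0 : R)).

Section Banach.
Context {R : realType} {d : measure_display} {T : measurableType d}.

Notation fn := (T -> R[i]).
Notation op := (fn -> fn).

Definition banach_in_Linfty (mu : {measure set T -> \bar R})
    (B : set fn) (nrm : fn -> R) :=
  (forall f g (c : R[i]), B f -> B g -> B (fun x => c * f x + g x)) /\
  (forall c : R[i], B (fun _ => c)) /\
  (forall f, B f -> 0 <= nrm f) /\
  (forall f, B f -> nrm f = 0 -> f = (fun _ => 0)) /\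
  (forall f g, B f -> B g -> nrm (fun x => f x + g x) <= nrm f + nrm g) /\
  (forall (c : R[i]) f, B f -> nrm (fun x => c * f x) = cabs c * nrm f) /\
  (forall u : nat -> fn, (forall n, B (u n)) ->
     (forall e, 0 < e -> exists N, forall m n, (N <= m)%N -> (N <= n)%N ->
        nrm (fun x => u m x - u n x) < e) ->
     exists f, B f /\ forall e, 0 < e -> exists N, forall n, (N <= n)%N ->
        nrm (fun x => u n x - f x) < e) /\
  (forall f, B f -> cmeasurable f /\ {ae mu, forall x, cabs (f x) <= nrm f}) /\
  (forall f, B f -> {ae mu, forall x, f x = 0} -> f = (fun _ => 0)).

Variables (B : set fn) (nrm : fn -> R).

Definition op_bound (A : op) (c : R) := forall f, B f -> nrm (A f) <= c * nrm f.

Definition bounded_op_on (S : set fn) (A : op) :=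
  (forall f, S f -> S (A f)) /\
  (forall f g (c : R[i]), S f -> S g ->
     A (fun x => c * f x + g x) = (fun x => c * A f x + A g x)) /\
  exists c, forall f, S f -> nrm (A f) <= c * nrm f.

Definition bounded_op := bounded_op_on B.

Definition op_deriv (F : R -> op) (t0 : R) (D : op) :=
  bounded_op D /\
  forall e, 0 < e -> exists del, 0 < del /\
    forall h, 0 < `|h| < del -> forall f, B f ->
      nrm (fun x => F (t0 + h) f x - F t0 f x - (h%:C)%C * D f x)
        <= e * `|h| * nrm f.

Definition in_resolvent (S : set fn) (A : op) (z : R[i]) :=
  exists Sinv : op, bounded_op_on S Sinv /\
    forall f, S f ->
      Sinv (fun x => z * f x - A f x) = f /\
      (fun x => z * Sinv f x - A (Sinv f) x) = f.

Definition spectrum (S : set fn) (A : op) (z : R[i]) := ~ in_resolvent S A z.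

(** lam is a simple isolated eigenvalue of A on B and P is the
    corresponding spectral projection: P is a bounded rank-one projection
    commuting with A, A = lam on range P, and lam is not in the spectrum of
    A restricted to ker P (Riesz decomposition). *)
Definition simple_eig_proj (A : op) (lam : R[i]) (P : op) :=
  bounded_op P /\ (forall f, B f -> P (P f) = P f) /\
  (exists e, B e /\ e <> (fun _ => 0) /\ P e = e /\
     forall f, B f -> exists c : R[i], P f = (fun x => c * e x)) /\
  (forall f, B f -> A (P f) = P (A f)) /\
  (forall f, B f -> A (P f) = (fun x => lam * P f x)) /\
  ~ spectrum [set f | B f /\ P f = (fun _ => 0)] A lam.

End Banach.

Definition Rt {R : realType} {d : measure_display} {T : measurableType d}
    (Rop : (T -> R[i]) -> (T -> R[i])) (v : T -> R) (t : R) :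
    (T -> R[i]) -> (T -> R[i]) :=
  fun f => Rop (fun x => cexpi (t * v x) * f x).

Definition Qt {R : realType} {d : measure_display} {T : measurableType d}
    (Rop : (T -> R[i]) -> (T -> R[i])) (v : T -> R)
    (P : R -> (T -> R[i]) -> (T -> R[i])) (t : R) :
    (T -> R[i]) -> (T -> R[i]) :=
  fun f => Rt Rop v t (fun x => f x - P t f x).

Definition H2 {R : realType} {d : measure_display} {T : measurableType d}
    (B : set (T -> R[i])) (nrm : (T -> R[i]) -> R)
    (Rop : (T -> R[i]) -> (T -> R[i])) (v : T -> R) (alpha : R)
    (ell : R -> R) (R' : R -> (T -> R[i]) -> (T -> R[i])) :=
  forall alpha', 1 < alpha' < alpha ->
  exists eps1 C, 0 < eps1 /\ 0 < C /\
  forall t h, `|t| < eps1 -> `|h| < eps1 ->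
    bounded_op B nrm (Rt Rop v t) /\ op_bound B nrm (Rt Rop v t) C /\
    bounded_op B nrm (R' t) /\ op_bound B nrm (R' t) C /\
    op_deriv B nrm (Rt Rop v) t (R' t) /\
    op_bound B nrm
      (fun f x => Rt Rop v (t + h) f x - Rt Rop v t f x - (h%:C)%C * R' 0 f x)
      (C * `|h| * (`|t| `^ (alpha' - 1) + `|h| `^ (alpha' - 1))) /\
    op_bound B nrm (fun f x => R' (t + h) f x - R' t f x)
      (C * `|h| `^ (alpha - 1) * ell0 alpha ell (`|h|^-1)).

Definition H3 {R : realType} {d : measure_display} {T : measurableType d}
    (B : set (T -> R[i])) (nrm : (T -> R[i]) -> R)
    (Rop : (T -> R[i]) -> (T -> R[i])) :=
  (exists P0, simple_eig_proj B nrm Rop 1 P0) /\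
  exists r : R, 0 <= r < 1 /\
    forall z, spectrum nrm B Rop z -> z <> 1 -> `|z| <= (r%:C)%C.

Definition eig_family {R : realType} {d : measure_display}
    {T : measurableType d}
    (B : set (T -> R[i])) (nrm : (T -> R[i]) -> R)
    (Rop : (T -> R[i]) -> (T -> R[i])) (v : T -> R)
    (lam : R -> R[i]) (P : R -> (T -> R[i]) -> (T -> R[i])) :=
  exists del : R, 0 < del /\ lam 0 = 1 /\
    (forall t, `|t| < del -> simple_eig_proj B nrm (Rt Rop v t) (lam t) (P t)) /\
    (forall t, `|t| < del -> forall e : R, 0 < e -> exists dl : R, 0 < dl /\
       forall s, `|s| < del -> `|s - t| < dl -> cabs (lam s - lam t) < e).

(* Main.v *)
Require Import Defs.
From HB Require Import structures.
From mathcomp Require Import all_boot all_order all_algebra.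
From mathcomp Require Import all_classical all_reals all_analysis.
Import Order.TTheory GRing.Theory Num.Theory.
From mathcomp Require Import complex.
Import numFieldNormedType.Exports.
From mathcomp Require Import measurable_realfun.
From mathcomp Require Import ring lra.
Unset Printing Implicit Defensive.
Local Open Scope ring_scope.
Local Open Scope classical_set_scope.

Section Scalars.
Context {R : realType}.

Lemma cabs_real (r : R) : cabs (r%:C)%C = `|r|.
Proof. by rewrite /cabs normc_def /= expr0n /= addr0 sqrtr_sqr. Qed.

Lemma cabsN1 : cabs (-1 : R[i]) = 1.
Proof. by rewrite -(rmorphN1 (real_complex R)) cabs_real normrN normr1. Qed.

Lemma cabs0 : cabs (0 : R[i]) = 0.
Proof. by rewrite -(rmorph0 (real_complex R)) cabs_real normr0. Qed.

Lemma cabs1 : cabs (1 : R[i]) = 1.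
Proof. by rewrite -(rmorph1 (real_complex R)) cabs_real normr1. Qed.

Lemma Re_le_cabs (z : R[i]) : `|complex.Re z| <= cabs z.
Proof.
rewrite /cabs normc_def /= -sqrtr_sqr; apply: ler_wsqrtr.
by rewrite lerDl sqr_ge0.
Qed.

Lemma Im_le_cabs (z : R[i]) : `|complex.Im z| <= cabs z.
Proof.
rewrite /cabs normc_def /= -sqrtr_sqr; apply: ler_wsqrtr.
by rewrite lerDr sqr_ge0.
Qed.

Lemma cexpi0 : cexpi (0 : R) = 1.
Proof. by rewrite /cexpi cos0 sin0. Qed.

Lemma le0_eps (x c : R) : 0 <= c -> (forall e, 0 < e -> x <= e * c) -> x <= 0.
Proof.
move=> c0 H; rewrite leNgt; apply/negP => x0.
have e0 : 0 < x / (c + 1) by apply: divr_gt0 => //; lra.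
have := H _ e0; rewrite mulrAC ler_pdivlMr; last by lra.
nra.
Qed.

Lemma div_le (a c : R) : 0 <= c -> 0 <= a -> a / (c + 1) * c <= a.
Proof.
move=> c0 a0; rewrite mulrAC ler_pdivrMr; last by lra.
nra.
Qed.

End Scalars.

Lemma pick_h {R : realType} {a b c : R} : 0 < a -> 0 < b -> 0 < c ->
  exists h, 0 < h /\ h < a /\ h < b /\ h < c.
Proof.
move=> a0 b0 c0; set m := Num.min a (Num.min b c).
have m0 : 0 < m by rewrite /m !lt_min a0 b0 c0.
have ma : m <= a by rewrite /m ge_min lexx.
have mb : m <= b by rewrite /m !ge_min lexx orbT.
have mc : m <= c by rewrite /m !ge_min lexx !orbT.
exists (m / 2); split; first by lra.
by split; [|split]; lra.
Qed.

Fixpoint Dit {R : realType} {T : Type} (DQ Q0 : (T -> R[i]) -> T -> R[i]) (n : nat) :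
  (T -> R[i]) -> T -> R[i] :=
  if n is n'.+1 then fun f x => DQ (iter n' Q0 f) x + Q0 (Dit DQ Q0 n' f) x
  else fun f x => 0.

Lemma posdiv {R : realType} (e c : R) : 0 < e -> 0 <= c -> 0 < e / 3 / (c + 1).
Proof. by move=> e0 c0; rewrite divr_gt0 //; lra. Qed.

Lemma e3le {R : realType} (e c : R) : 0 < e -> 0 <= c -> e / 3 / (c + 1) * c <= e / 3.
Proof. move=> e0 c0; apply: div_le => //; lra. Qed.

Lemma sum3 {R : realType} (n1 n2 n3 A Bc C X e : R) : 0 <= X -> n1 <= A * X ->
  n2 <= Bc * X -> n3 <= C * X -> A <= e / 3 -> Bc <= e / 3 -> C <= e / 3 ->
  n1 + n2 + n3 <= e * X.
Proof.
move=> X0 h1 h2 h3 a b c.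
have : (A + Bc + C) * X <= e * X by apply: ler_wpM2r => //; lra.
rewrite !mulrDl; lra.
Qed.

Lemma lin_aux {R : realType} (a b hh nD cDF cDG nf : R) : 0 <= hh -> 0 <= cDF -> 0 <= nD ->
  a <= 1 * hh * nD -> b <= cDF * nD -> nD <= cDG * nf ->
  a + hh * b <= hh * ((1 + cDF) * cDG) * nf.
Proof.
move=> h0 c0 n0 ha hb hD.
have q1 : hh * b <= hh * (cDF * nD) by apply: ler_wpM2l.
have q2 : hh * (1 + cDF) * nD <= hh * (1 + cDF) * (cDG * nf).
  by apply: ler_wpM2l => //; rewrite mulr_ge0 //; lra.
have -> : hh * ((1 + cDF) * cDG) * nf = hh * (1 + cDF) * (cDG * nf) by ring.
apply: le_trans q2; have -> : hh * (1 + cDF) * nD = 1 * hh * nD + hh * (cDF * nD) by ring.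
exact: lerD.
Qed.

Section Ops.
Context {R : realType} {d : measure_display} {T : measurableType d}.
Variables (B : set (T -> R[i])) (nrm : (T -> R[i]) -> R).
Hypothesis Bcomb : forall f g (c : R[i]), B f -> B g -> B (fun x => c * f x + g x).
Hypothesis Bcst : forall c : R[i], B (fun _ => c).
Hypothesis nrm_ge0 : forall f, B f -> 0 <= nrm f.
Hypothesis nrm_eq0 : forall f, B f -> nrm f = 0 -> f = (fun _ => 0).
Hypothesis nrm_tri : forall f g, B f -> B g -> nrm (fun x => f x + g x) <= nrm f + nrm g.
Hypothesis nrm_scale : forall (c : R[i]) f, B f -> nrm (fun x => c * f x) = cabs c * nrm f.

Lemma B0 : B (fun _ => 0). Proof. exact: Bcst. Qed.
Lemma BD {f g} : B f -> B g -> B (fun x => f x + g x).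
Proof. by move=> Bf Bg; have := Bcomb f g 1 Bf Bg; under eq_fun do rewrite mul1r. Qed.
Lemma BZ c {f} : B f -> B (fun x => c * f x).
Proof. by move=> Bf; have := Bcomb f _ c Bf B0; under eq_fun do rewrite addr0. Qed.
Lemma BN {f} : B f -> B (fun x => - f x).
Proof. by move=> Bf; have := BZ (-1) Bf; under eq_fun do rewrite mulN1r. Qed.
Lemma BB {f g} : B f -> B g -> B (fun x => f x - g x).
Proof. by move=> Bf Bg; apply: BD => //; exact: BN. Qed.

Lemma nrm0 : nrm (fun _ => 0) = 0.
Proof.
have := nrm_scale 0 _ B0; under eq_fun do rewrite mul0r.
by rewrite cabs0 mul0r.
Qed.
Lemma nrmN {f} : B f -> nrm (fun x => - f x) = nrm f.
Proof.
move=> Bf; have := nrm_scale (-1) f Bf; under eq_fun do rewrite mulN1r.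
by rewrite cabsN1 mul1r.
Qed.
Lemma nrmB {f g} : B f -> B g -> nrm (fun x => f x - g x) <= nrm f + nrm g.
Proof. by move=> Bf Bg; rewrite -(nrmN Bg); apply: nrm_tri => //; exact: BN. Qed.
Lemma nrmZr (h : R) {f} : B f -> nrm (fun x => (h%:C)%C * f x) = `|h| * nrm f.
Proof. by move=> Bf; rewrite nrm_scale // cabs_real. Qed.

Lemma nrm_eps0 {f} c : B f -> 0 <= c -> (forall e, 0 < e -> nrm f <= e * c) ->
  f = (fun _ => 0).
Proof.
move=> Bf c0 H; apply: nrm_eq0 => //; apply/eqP; rewrite eq_le nrm_ge0 // andbT.
exact: le0_eps H.
Qed.

Lemma fun_eq0 (f g : T -> R[i]) : (fun x => f x - g x) = (fun _ => 0) -> f = g.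
Proof. by move=> H; apply/funext => x; have := congr1 (fun k => k x) H => /= /eqP; rewrite subr_eq0 => /eqP. Qed.

Notation op := ((T -> R[i]) -> (T -> R[i])).

Section Lin.
Context {A : op}.
Hypothesis bA : bounded_op B nrm A.
Lemma opB {f} : B f -> B (A f). Proof. by case: bA => + _; apply. Qed.
Lemma opL {f g} c : B f -> B g -> A (fun x => c * f x + g x) = (fun x => c * A f x + A g x).
Proof. by case: bA => _ [+ _]; apply. Qed.
Lemma opbnd : exists c, 0 <= c /\ forall f, B f -> nrm (A f) <= c * nrm f.
Proof.
case: bA => _ [_ [c Hc]]; exists `|c|; split => // f Bf.
apply: le_trans (Hc _ Bf) _; apply: ler_wpM2r; [exact: nrm_ge0| exact: ler_norm].
Qed.
Lemma op0 : A (fun _ => 0) = (fun _ => 0).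
Proof.
have := opL (-1) B0 B0; under eq_fun do rewrite mulN1r addNr.
by move=> ->; apply/funext => x; rewrite mulN1r addNr.
Qed.
Lemma opD {f g} : B f -> B g -> A (fun x => f x + g x) = (fun x => A f x + A g x).
Proof.
move=> Bf Bg; have := opL 1 Bf Bg; under eq_fun do rewrite mul1r.
by move=> ->; apply/funext => x; rewrite mul1r.
Qed.
Lemma opZ c {f} : B f -> A (fun x => c * f x) = (fun x => c * A f x).
Proof.
move=> Bf; have := opL c Bf B0; under eq_fun do rewrite addr0.
by move=> ->; rewrite op0; apply/funext => x; rewrite addr0.
Qed.
Lemma opN {f} : B f -> A (fun x => - f x) = (fun x => - A f x).
Proof.
move=> Bf; have := opZ (-1) Bf; under eq_fun do rewrite mulN1r.
by move=> ->; apply/funext => x; rewrite mulN1r.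
Qed.
Lemma opBB {f g} : B f -> B g -> A (fun x => f x - g x) = (fun x => A f x - A g x).
Proof.
move=> Bf Bg; rewrite opD //; last exact: BN.
by rewrite opN.
Qed.
End Lin.


Lemma op_deriv0 F D : op_deriv B nrm F 0 D <->
  bounded_op B nrm D /\ forall e, 0 < e -> exists del, 0 < del /\
    forall h, 0 < `|h| < del -> forall f, B f ->
      nrm (fun x => F h f x - F 0 f x - (h%:C)%C * D f x) <= e * `|h| * nrm f.
Proof.
split => -[bD H]; split => // e e0; have [del [d0 Hd]] := H e e0;
  exists del; split => // h hh f Bf; have := Hd h hh f Bf; by rewrite add0r.
Qed.

Lemma deriv_unique F1 F2 D1 D2 : op_deriv B nrm F1 0 D1 -> op_deriv B nrm F2 0 D2 ->
  (exists del, 0 < del /\ forall h, `|h| < del -> forall f, B f ->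
     F1 h f = F2 h f /\ B (F1 h f)) ->
  forall f, B f -> D1 f = D2 f.
Proof.
move=> /op_deriv0 [bD1 H1] /op_deriv0 [bD2 H2] [del [d0 Hd]] f Bf.
have BD1 := opB bD1 Bf; have BD2 := opB bD2 Bf.
apply: fun_eq0; apply: (nrm_eps0 (2 * nrm f)); first exact: BB.
  by rewrite mulr_ge0 // nrm_ge0.
move=> e e0.
have [d1 [d10 Hd1]] := H1 e e0; have [d2 [d20 Hd2]] := H2 e e0.
have [h [h0 [hdel [hd1 hd2]]]] := pick_h d0 d10 d20.
have nh : `|h| = h by rewrite gtr0_norm.
have [E1 B1] := Hd h ltac:(by rewrite nh) f Bf.
have [E0 B0'] := Hd 0 ltac:(by rewrite normr0) f Bf.
have E : (fun x => (h%:C)%C * (D1 f x - D2 f x)) =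
  (fun x => (F2 h f x - F2 0 f x - (h%:C)%C * D2 f x) -
            (F1 h f x - F1 0 f x - (h%:C)%C * D1 f x)).
  by apply/funext => x; rewrite -E1 -E0; ring.
have := nrmZr h (BB BD1 BD2); rewrite E => Hn.
have BF2h : B (F2 h f) by rewrite -E1.
have BF20 : B (F2 0 f) by rewrite -E0.
have R1 : nrm (fun x => F1 h f x - F1 0 f x - (h%:C)%C * D1 f x) <= e * `|h| * nrm f.
  by apply: Hd1 Bf; rewrite nh h0 hd1.
have R2 : nrm (fun x => F2 h f x - F2 0 f x - (h%:C)%C * D2 f x) <= e * `|h| * nrm f.
  by apply: Hd2 Bf; rewrite nh h0 hd2.
have Bs1 : B (fun x => F1 h f x - F1 0 f x - (h%:C)%C * D1 f x).
  by apply: BB; [apply: BB| apply: BZ].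
have Bs2 : B (fun x => F2 h f x - F2 0 f x - (h%:C)%C * D2 f x).
  by apply: BB; [apply: BB| apply: BZ].
have := nrmB Bs2 Bs1; rewrite /= Hn nh => Hle.
have : h * nrm (fun x => D1 f x - D2 f x) <= h * (e * (2 * nrm f)).
  apply: (le_trans Hle); rewrite nh in R1 R2; lra.
by rewrite ler_pM2l.
Qed.

Lemma bop_comp A1 A2 : bounded_op B nrm A1 -> bounded_op B nrm A2 ->
  bounded_op B nrm (fun f => A1 (A2 f)).
Proof.
move=> b1 b2; have [c1 [c10 H1]] := opbnd b1; have [c2 [c20 H2]] := opbnd b2.
split; first by move=> f Bf; apply: (opB b1); apply: (opB b2).
split.
  move=> f g c Bf Bg; rewrite (opL b2) //; rewrite (opL b1) //; exact: (opB b2).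
exists (c1 * c2) => f Bf; apply: le_trans (H1 _ (opB b2 Bf)) _.
by rewrite -mulrA ler_wpM2l // H2.
Qed.

Lemma bop_add A1 A2 : bounded_op B nrm A1 -> bounded_op B nrm A2 ->
  bounded_op B nrm (fun f x => A1 f x + A2 f x).
Proof.
move=> b1 b2; have [c1 [c10 H1]] := opbnd b1; have [c2 [c20 H2]] := opbnd b2.
split; first by move=> f Bf; apply: BD; [apply: (opB b1)| apply: (opB b2)].
split.
  move=> f g c Bf Bg; rewrite (opL b2) // (opL b1) //.
  by apply/funext => x; ring.
exists (c1 + c2) => f Bf; apply: le_trans (nrm_tri _ _ (opB b1 Bf) (opB b2 Bf)) _.
by rewrite mulrDl lerD // ?H1 ?H2.
Qed.

Lemma bop_neg A : bounded_op B nrm A -> bounded_op B nrm (fun f x => - A f x).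
Proof.
move=> b1; have [c1 [c10 H1]] := opbnd b1.
split; first by move=> f Bf; apply: BN; apply: (opB b1).
split.
  move=> f g c Bf Bg; rewrite (opL b1) //.
  by apply/funext => x; ring.
by exists c1 => f Bf; rewrite nrmN ?H1 //; apply: (opB b1).
Qed.

Lemma bop_id : bounded_op B nrm (fun f => f).
Proof. by split => //; split => //; exists 1 => f _; rewrite mul1r. Qed.

Lemma bop_zero : bounded_op B nrm (fun f x => 0).
Proof.
split; first by move=> f _ /=; exact: B0.
split; first by move=> *; apply/funext => x; rewrite mulr0 addr0.
by exists 0 => f _; rewrite nrm0 mul0r.
Qed.

Lemma bop_IA A : bounded_op B nrm A -> bounded_op B nrm (fun f x => f x - A f x).
Proof. by move=> b; apply: bop_add; [exact: bop_id| exact: bop_neg]. Qed.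

Lemma min2 {a b : R} : 0 < a -> 0 < b -> exists c, 0 < c /\ c <= a /\ c <= b.
Proof.
move=> a0 b0; exists (Num.min a b); rewrite lt_min a0 b0 !ge_min !lexx ?orbT.
by split.
Qed.

Lemma deriv_unif F DF : (exists del, 0 < del /\ forall h, `|h| < del -> bounded_op B nrm (F h)) ->
  op_deriv B nrm F 0 DF ->
  exists del K, 0 < del /\ 0 <= K /\ forall h, `|h| < del -> forall g, B g ->
    nrm (F h g) <= K * nrm g.
Proof.
move=> [del [d0 Hb]] /op_deriv0 [bD HD].
have [c0 [c00 H0]] := opbnd (Hb 0 ltac:(by rewrite normr0)).
have [cD [cD0 HcD]] := opbnd bD.
have [d1 [d10 Hd1]] := HD 1 ltr01.
have [m1 [m10 [m1a m1b]]] := min2 d0 d10.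
have [m [m0 [ma mb]]] := min2 m10 ltr01.
exists m, (c0 + 1 + cD); split => //; split; first by lra.
move=> h hm g Bg.
have Bg0 := nrm_ge0 _ Bg.
have [->|hn0] := eqVneq h 0.
  apply: le_trans (H0 _ Bg) _; apply: ler_wpM2r => //; lra.
have hpos : 0 < `|h| by rewrite normr_gt0.
have Bh := Hb h ltac:(lra).
have B0g := opB (Hb 0 ltac:(by rewrite normr0)) Bg.
have BDg := opB bD Bg.
have BFh := opB Bh Bg.
have E : F h g = (fun x => F 0 g x + (F h g x - F 0 g x - (h%:C)%C * DF g x) + (h%:C)%C * DF g x).
  by apply/funext => x; ring.
have Br : B (fun x => F h g x - F 0 g x - (h%:C)%C * DF g x) by apply: BB; [apply: BB|apply: BZ].
have Hr := Hd1 h ltac:(rewrite hpos /=; lra) g Bg.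
have HZ := nrmZr h BDg.
have HDg := HcD g Bg.
have H0g := H0 g Bg.
rewrite E; apply: le_trans (nrm_tri _ _ (BD B0g Br) (BZ _ BDg)) _.
apply: le_trans (lerD (nrm_tri _ _ B0g Br) (lexx _)) _.
rewrite HZ.
have : `|h| * nrm (DF g) <= 1 * (cD * nrm g).
  apply: ler_pM => //; [exact: nrm_ge0| lra].
have : 1 * `|h| * nrm g <= 1 * nrm g by rewrite mul1r; apply: ler_wpM2r => //; lra.
nra.
Qed.

Lemma deriv_comp F G DF DG :
  (exists del, 0 < del /\ forall h, `|h| < del ->
     bounded_op B nrm (F h) /\ bounded_op B nrm (G h)) ->
  op_deriv B nrm F 0 DF -> op_deriv B nrm G 0 DG ->
  op_deriv B nrm (fun t f => F t (G t f)) 0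
    (fun f x => DF (G 0 f) x + F 0 (DG f) x).
Proof.
move=> [del [d0 Hb]] dF dG.
have [dK [K [dK0 [K0 HK]]]] : exists del K, 0 < del /\ 0 <= K /\
    forall h, `|h| < del -> forall g, B g -> nrm (F h g) <= K * nrm g.
  apply: deriv_unif dF; exists del; split => // h hd; by case: (Hb h hd).
move: dF dG => /op_deriv0 [bDF HF] /op_deriv0 [bDG HG].
have [bF0 bG0] := Hb 0 ltac:(by rewrite normr0).
have [cG0 [cG00 HcG0]] := opbnd bG0.
have [cDF [cDF0 HcDF]] := opbnd bDF.
have [cDG [cDG0 HcDG]] := opbnd bDG.
apply/op_deriv0; split.
  by apply: bop_add; [exact: bop_comp| exact: bop_comp].
move=> e e0.
set e1 := e / 3 / (cG0 + 1).
set e2 := e / 3 / (K + 1).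
set X := (1 + cDF) * cDG.
have X0 : 0 <= X by rewrite /X mulr_ge0 //; lra.
set d3 := e / 3 / (X + 1).
have e10 : 0 < e1 by apply: posdiv.
have e20 : 0 < e2 by apply: posdiv.
have d30 : 0 < d3 by apply: posdiv.
have [dA [dA0 HA]] := HF e1 e10.
have [dB [dB0 HB']] := HG e2 e20.
have [dC [dC0 HC]] := HF 1 ltr01.
have [m1 [m10 [m1a m1b]]] := min2 d0 dK0.
have [m2 [m20 [m2a m2b]]] := min2 dA0 dB0.
have [m3 [m30 [m3a m3b]]] := min2 dC0 d30.
have [m4 [m40 [m4a m4b]]] := min2 m10 m20.
have [m [m0 [ma mb]]] := min2 m40 m30.
exists m; split => // h /andP[hpos hm] f Bf.
have hdel : `|h| < del := lt_le_trans hm (le_trans ma (le_trans m4a m1a)).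
have hK : `|h| < dK := lt_le_trans hm (le_trans ma (le_trans m4a m1b)).
have hA : 0 < `|h| < dA by rewrite hpos (lt_le_trans hm (le_trans ma (le_trans m4b m2a))).
have hB : 0 < `|h| < dB by rewrite hpos (lt_le_trans hm (le_trans ma (le_trans m4b m2b))).
have hC : 0 < `|h| < dC by rewrite hpos (lt_le_trans hm (le_trans mb m3a)).
have hd3 : `|h| <= d3 := ltW (lt_le_trans hm (le_trans mb m3b)).
have [bFh bGh] := Hb h hdel.
have BG0f := opB bG0 Bf; have BGhf := opB bGh Bf; have BDGf := opB bDG Bf.
have BF0G0 := opB bF0 BG0f; have BFhG0 := opB bFh BG0f.
have BDFG0 := opB bDF BG0f.
have BFhDG := opB bFh BDGf; have BF0DG := opB bF0 BDGf.
have BDFDG := opB bDF BDGf.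
have nf0 := nrm_ge0 _ Bf.
set T1 := fun x => F h (G 0 f) x - F 0 (G 0 f) x - (h%:C)%C * DF (G 0 f) x.
set r := fun x => G h f x - G 0 f x - (h%:C)%C * DG f x.
set T3 := fun x => (h%:C)%C * (F h (DG f) x - F 0 (DG f) x).
have Br : B r by apply: BB; [apply: BB| apply: BZ].
have BT1 : B T1 by apply: BB; [apply: BB| apply: BZ].
have BT2 : B (F h r) by apply: (opB bFh).
have BT3 : B T3 by apply: BZ; apply: BB.
have E : (fun x => F h (G h f) x - F 0 (G 0 f) x -
     (h%:C)%C * (DF (G 0 f) x + F 0 (DG f) x)) =
    (fun x => T1 x + F h r x + T3 x).
  have Ba : B (fun x => G h f x - G 0 f x) by apply: BB.
  have Bb : B (fun x => (h%:C)%C * DG f x) by apply: BZ.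
  rewrite /r (opBB bFh Ba Bb) (opBB bFh BGhf BG0f) (opZ bFh _ BDGf).
  by apply/funext => x; rewrite /T1 /T3; ring.
rewrite E; apply: le_trans (nrm_tri _ _ (BD BT1 BT2) BT3) _.
apply: le_trans (lerD (nrm_tri _ _ BT1 BT2) (lexx _)) _.
have hh0 : 0 <= `|h| by [].
have H1 : nrm T1 <= (e1 * cG0) * (`|h| * nrm f).
  apply: le_trans (HA h hA _ BG0f) _.
  have -> : e1 * cG0 * (`|h| * nrm f) = e1 * `|h| * (cG0 * nrm f) by ring.
  apply: ler_wpM2l; first by rewrite mulr_ge0 // ltW.
  exact: HcG0.
have H2 : nrm (F h r) <= (K * e2) * (`|h| * nrm f).
  apply: le_trans (HK h hK _ Br) _.
  have -> : K * e2 * (`|h| * nrm f) = K * (e2 * `|h| * nrm f) by ring.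
  apply: ler_wpM2l => //; exact: HB' h hB f Bf.
have H3 : nrm T3 <= (`|h| * X) * (`|h| * nrm f).
  rewrite /T3 nrmZr; last by apply: BB.
  have -> : `|h| * X * (`|h| * nrm f) = `|h| * (`|h| * X * nrm f) by ring.
  apply: ler_wpM2l => //.
  have Er : (fun x => F h (DG f) x - F 0 (DG f) x) =
     (fun x => (F h (DG f) x - F 0 (DG f) x - (h%:C)%C * DF (DG f) x) + (h%:C)%C * DF (DG f) x).
    by apply/funext => x; ring.
  rewrite Er; apply: le_trans (nrm_tri _ _ _ _) _.
  - by apply: BB; [apply: BB| apply: BZ].
  - by apply: BZ.
  rewrite nrmZr // /X.
  apply: (@lin_aux _ _ _ _ (nrm (DG f))) => //; first exact: (nrm_ge0 _ BDGf).
  - exact: HC h hC _ BDGf.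
  - exact: HcDF _ BDGf.
  - exact: HcDG _ Bf.
have he1 : e1 * cG0 <= e / 3 by apply: e3le.
have he2 : K * e2 <= e / 3 by rewrite mulrC; apply: e3le.
have he3 : `|h| * X <= e / 3.
  apply: le_trans (_ : d3 * X <= _); last by apply: e3le.
  by apply: ler_wpM2r.
have hn0 : 0 <= `|h| * nrm f by rewrite mulr_ge0.
rewrite -mulrA; exact: (@sum3 _ _ _ _ _ _ _ _ _ hn0 H1 H2 H3 he1 he2 he3).
Qed.

Lemma deriv_IA P DP : (exists del, 0 < del /\ forall h, `|h| < del -> bounded_op B nrm (P h)) ->
  op_deriv B nrm P 0 DP ->
  op_deriv B nrm (fun t f x => f x - P t f x) 0 (fun f x => - DP f x).
Proof.
move=> [del [d0 Hb]] /op_deriv0 [bD HD]; apply/op_deriv0; split.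
  exact: bop_neg.
move=> e e0; have [d1 [d10 Hd1]] := HD e e0.
have [m [m0 [ma mb]]] := min2 d0 d10.
exists m; split => // h /andP[hpos hm] f Bf.
have E : (fun x => f x - P h f x - (f x - P 0 f x) - (h%:C)%C * - DP f x) =
  (fun x => - (P h f x - P 0 f x - (h%:C)%C * DP f x)).
  by apply/funext => x; ring.
rewrite E nrmN; first by apply: Hd1 => //; rewrite hpos /=; lra.
apply: BB; [apply: BB| apply: BZ].
- exact: (opB (Hb h ltac:(lra))).
- exact: (opB (Hb 0 ltac:(by rewrite normr0))).
- exact: (opB bD).
Qed.

Lemma deriv_id0 : op_deriv B nrm (fun t f => f) 0 (fun f x => 0).
Proof.
apply/op_deriv0; split; first exact: bop_zero.
move=> e e0; exists 1; split => // h _ f Bf.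
have -> : (fun x => f x - f x - (h%:C)%C * 0) = (fun _ => 0).
  by apply/funext => x; ring.
by rewrite nrm0 mulr_ge0 // ?nrm_ge0 // mulr_ge0 // ltW.
Qed.

Lemma bop_iter {A} n : bounded_op B nrm A -> bounded_op B nrm (iter n A).
Proof.
move=> bA; elim: n => [|n IH]; first exact: bop_id.
have -> : iter n.+1 A = (fun f => A (iter n A f)) by [].
exact: bop_comp.
Qed.

Lemma deriv_iter Q DQ :
  (exists del, 0 < del /\ forall h, `|h| < del -> bounded_op B nrm (Q h)) ->
  op_deriv B nrm Q 0 DQ ->
  forall n, op_deriv B nrm (fun t => iter n (Q t)) 0 (Dit DQ (Q 0) n).
Proof.
move=> hb dQ; elim => [|n IH].
  have -> : (fun t => iter 0 (Q t)) = (fun t f => f) by [].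
  exact: deriv_id0.
have -> : (fun t => iter n.+1 (Q t)) = (fun t f => Q t (iter n (Q t) f)) by [].
have -> : Dit DQ (Q 0) n.+1 = (fun f x => DQ (iter n (Q 0) f) x + Q 0 (Dit DQ (Q 0) n f) x) by [].
apply: deriv_comp => //.
case: hb => del [d0 H]; exists del; split => // h hd; split; first exact: H.
exact: bop_iter (H h hd).
Qed.


Section Abstract.
Variables (Rop : op) (v : T -> R) (P : R -> op) (R' : R -> op) (DP0 : op)
  (m : (T -> R[i]) -> R[i]).
Hypothesis hR : exists eps, 0 < eps /\ forall t, `|t| < eps -> bounded_op B nrm (Rt Rop v t).
Hypothesis dR : op_deriv B nrm (Rt Rop v) 0 (R' 0).
Hypothesis hP : exists del, 0 < del /\ forall t, `|t| < del ->
  bounded_op B nrm (P t) /\ (forall f, B f -> P t (P t f) = P t f).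
Hypothesis dP0 : op_deriv B nrm P 0 DP0.
Hypothesis comm : forall f, B f -> Rt Rop v 0 (P 0 f) = P 0 (Rt Rop v 0 f).
Hypothesis eigen : forall f, B f -> Rt Rop v 0 (P 0 f) = (fun x => 1 * P 0 f x).
Hypothesis res : ~ spectrum nrm [set f | B f /\ P 0 f = (fun _ => 0)] (Rt Rop v 0) 1.
Hypothesis one : Rt Rop v 0 (fun _ => 1) = (fun _ => 1).
Hypothesis mlin : forall f g, B f -> B g -> m (fun x => f x - g x) = m f - m g.
Hypothesis minv : forall f, B f -> m (Rt Rop v 0 f) = m f.

Let S := [set f | B f /\ P 0 f = (fun _ => 0)].

Lemma bP0 : bounded_op B nrm (P 0).
Proof. by case: hP => del [d0 H]; case: (H 0 ltac:(by rewrite normr0)). Qed.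
Lemma idemP0 f : B f -> P 0 (P 0 f) = P 0 f.
Proof. by case: hP => del [d0 H]; case: (H 0 ltac:(by rewrite normr0)) => _; apply. Qed.
Lemma bR0 : bounded_op B nrm (Rt Rop v 0).
Proof. by case: hR => del [d0 H]; apply: H; rewrite normr0. Qed.

Lemma resolv : exists Sinv : op, bounded_op_on nrm S Sinv /\
    forall f, S f -> Sinv (fun x => 1 * f x - Rt Rop v 0 f x) = f /\
      (fun x => 1 * Sinv f x - Rt Rop v 0 (Sinv f) x) = f.
Proof. by move: res; rewrite /spectrum => /contrapT. Qed.

Lemma P01 : P 0 (fun _ => 1) = (fun _ => 1).
Proof.
have [Sinv [[SS [Slin _]] HS]] := resolv.
have B1 : B (fun _ : T => (1 : R[i])) := Bcst 1.
have BP1 := opB bP0 B1.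
set k := fun x => 1 - P 0 (fun _ => 1) x.
have Bk : B k by apply: BB.
have Pk : P 0 k = (fun _ => 0).
  rewrite /k (opBB bP0 B1 BP1) idemP0 //.
  by apply/funext => x; rewrite subrr.
have Rk : Rt Rop v 0 k = k.
  rewrite /k (opBB bR0 B1 BP1) one eigen //.
  by apply/funext => x; rewrite mul1r.
have Sk : S k by [].
have S0 : S (fun _ => 0) by split; [exact: B0| exact: (op0 bP0)].
have Sinv0 : Sinv (fun _ => 0) = (fun _ => 0).
  have := Slin _ _ (-1) S0 S0.
  have -> : (fun x : T => -1 * (0 : R[i]) + 0) = (fun _ => 0) by apply/funext => x; ring.
  move=> ->; apply/funext => x; ring.
have [+ _] := HS k Sk.
rewrite Rk.
have -> : (fun x => 1 * k x - k x) = (fun _ => 0) by apply/funext => x; ring.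
rewrite Sinv0 => /esym; rewrite /k => /fun_eq0 <-.
by [].
Qed.

Lemma mS f : S f -> m f = 0.
Proof.
have [Sinv [[SS _] HS]] := resolv.
move=> Sf; have Sg := SS _ Sf; have [_ E] := HS f Sf.
case: Sg => Bg _.
rewrite -E.
have -> : (fun x => 1 * Sinv f x - Rt Rop v 0 (Sinv f) x) =
  (fun x => Sinv f x - Rt Rop v 0 (Sinv f) x) by apply/funext => x; rewrite mul1r.
rewrite mlin // ?minv ?subrr //; exact: (opB bR0).
Qed.

Lemma S_RIP f : B f -> S (Rt Rop v 0 (fun x => f x - P 0 f x)).
Proof.
move=> Bf; have BPf := opB bP0 Bf.
have Bd : B (fun x => f x - P 0 f x) by apply: BB.
split; first exact: (opB bR0).
rewrite -comm // (opBB bP0 Bf BPf) idemP0 //.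
have -> : (fun x => P 0 f x - P 0 f x) = (fun _ => 0) by apply/funext => x; rewrite subrr.
exact: (op0 bR0).
Qed.

Lemma PDP1 DP : op_deriv B nrm P 0 DP -> P 0 (DP (fun _ => 1)) = (fun _ => 0).
Proof.
move=> dP.
have hb : exists del, 0 < del /\ forall h, `|h| < del ->
    bounded_op B nrm (P h) /\ bounded_op B nrm (P h).
  by case: hP => del [d0 H]; exists del; split => // h hd; case: (H h hd).
have dPP := deriv_comp _ _ _ _ hb dP dP.
have U := deriv_unique _ _ _ _ dP dPP.
have B1 : B (fun _ : T => (1 : R[i])) := Bcst 1.
have := U ltac:(case: hP => del [d0 H]; exists del; split => // h hd f Bf;
   case: (H h hd) => bh ih; split; [by rewrite ih| exact: (opB bh)]) _ B1.
rewrite P01 => E.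
apply/funext => x; have := congr1 (fun g => g x) E => /= /eqP.
by rewrite -subr_eq0 opprD addrA subrr sub0r oppr_eq0 => /eqP.
Qed.


Lemma bQ : exists del, 0 < del /\ forall h, `|h| < del -> bounded_op B nrm (Qt Rop v P h).
Proof.
case: hR => e [e0 H1]; case: hP => del [d0 H2].
have [m' [m0 [ma mb]]] := min2 e0 d0.
exists m'; split => // h hm.
have b1 := H1 h (lt_le_trans hm ma).
have [b2 _] := H2 h (lt_le_trans hm mb).
exact: (bop_comp _ _ b1 (bop_IA _ b2)).
Qed.

Lemma bQ0 : bounded_op B nrm (Qt Rop v P 0).
Proof. by case: bQ => del [d0 H]; apply: H; rewrite normr0. Qed.

Definition DQ0 : op := fun f x =>
  R' 0 (fun x => f x - P 0 f x) x + Rt Rop v 0 (fun x => - DP0 f x) x.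

Lemma dQ0 : op_deriv B nrm (Qt Rop v P) 0 DQ0.
Proof.
have hbP : exists del, 0 < del /\ forall h, `|h| < del -> bounded_op B nrm (P h).
  by case: hP => del [d0 H]; exists del; split => // h hd; case: (H h hd).
have hb : exists del, 0 < del /\ forall h, `|h| < del ->
    bounded_op B nrm (Rt Rop v h) /\ bounded_op B nrm (fun f x => f x - P h f x).
  case: hR => e [e0 H1]; case: hbP => del [d0 H2].
  have [m' [m0 [ma mb]]] := min2 e0 d0.
  exists m'; split => // h hm; split; first exact: H1 (lt_le_trans hm ma).
  exact: bop_IA _ (H2 h (lt_le_trans hm mb)).
have H := deriv_comp _ _ _ _ hb dR (deriv_IA _ _ hbP dP0).
exact: H.
Qed.

Lemma bDQ0 : bounded_op B nrm DQ0.
Proof. by case: dQ0. Qed.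

Lemma Q01 : Qt Rop v P 0 (fun _ => 1) = (fun _ => 0).
Proof.
rewrite /Qt P01.
have -> : (fun x : T => (1 : R[i]) - 1) = (fun _ => 0) by apply/funext => x; rewrite subrr.
exact: (op0 bR0).
Qed.

Lemma iterQ0 k : iter k (Qt Rop v P 0) (fun _ => 0) = (fun _ => 0).
Proof. by elim: k => [//|k IH]; rewrite iterS IH (op0 bQ0). Qed.

Lemma iterQ1 k : iter k.+1 (Qt Rop v P 0) (fun _ => 1) = (fun _ => 0).
Proof. by rewrite iterSr Q01 iterQ0. Qed.

Lemma DQ01 : DQ0 (fun _ => 1) = Rt Rop v 0 (fun x => - DP0 (fun _ => 1) x).
Proof.
rewrite /DQ0 P01.
have -> : (fun x : T => (1 : R[i]) - 1) = (fun _ => 0) by apply/funext => x; rewrite subrr.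
have bR' : bounded_op B nrm (R' 0) by case: dR.
rewrite (op0 bR'); apply/funext => x; by rewrite add0r.
Qed.

Lemma S_DQ01 : S (DQ0 (fun _ => 1)).
Proof.
have B1 : B (fun _ : T => (1 : R[i])) := Bcst 1.
have bDP : bounded_op B nrm DP0 by case: dP0.
have BD1 := opB bDP B1.
rewrite DQ01; split; first by apply: (opB bR0); apply: BN.
rewrite -comm; last exact: BN.
rewrite (opN bP0) // PDP1 //.
have -> : (fun x : T => - (0 : R[i])) = (fun _ => 0) by apply/funext => x; rewrite oppr0.
exact: (op0 bR0).
Qed.

Lemma Dit_one n : Dit DQ0 (Qt Rop v P 0) n.+1 (fun _ => 1) =
  iter n (Qt Rop v P 0) (DQ0 (fun _ => 1)).
Proof.
elim: n => [|n IH].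
  rewrite /= (op0 bQ0); apply/funext => x; by rewrite addr0.
have -> : Dit DQ0 (Qt Rop v P 0) n.+2 (fun _ => 1) =
  (fun x => DQ0 (iter n.+1 (Qt Rop v P 0) (fun _ => 1)) x +
     Qt Rop v P 0 (Dit DQ0 (Qt Rop v P 0) n.+1 (fun _ => 1)) x) by [].
rewrite iterQ1 (op0 bDQ0) IH iterS.
by apply/funext => x; rewrite add0r.
Qed.

Lemma S_iter k : S (iter k (Qt Rop v P 0) (DQ0 (fun _ => 1))).
Proof.
elim: k => [|k [IH _]]; first exact: S_DQ01.
rewrite iterS; exact: S_RIP.
Qed.

Lemma abstract_main :
  (forall DP, op_deriv B nrm P 0 DP -> m (DP (fun _ => 1)) = 0) /\
  (forall n : nat, (1 <= n)%N ->
     (exists DQ, op_deriv B nrm (Qt Rop v P) 0 DQ) /\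
     (exists Dn, op_deriv B nrm (fun t => iter n (Qt Rop v P t)) 0 Dn) /\
     (forall DQ Dn, op_deriv B nrm (Qt Rop v P) 0 DQ ->
        op_deriv B nrm (fun t => iter n (Qt Rop v P t)) 0 Dn ->
        m (Dn (fun _ => 1))
          = m (iter n.-1 (Qt Rop v P 0) (DQ (fun _ => 1))) /\
        m (iter n.-1 (Qt Rop v P 0) (DQ (fun _ => 1))) = 0)).
Proof.
have B1 : B (fun _ : T => (1 : R[i])) := Bcst 1.
split.
  move=> DP dP; apply: mS; split; last exact: PDP1.
  by case: dP => bD _; exact: (opB bD).
case=> // n _.
have diter := deriv_iter _ _ bQ dQ0 n.+1.
split; first by exists DQ0; exact: dQ0.
split; first by exists (Dit DQ0 (Qt Rop v P 0) n.+1).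
move=> DQ Dn dQ dn.
have E1 : DQ (fun _ => 1) = DQ0 (fun _ => 1).
  apply: (deriv_unique _ _ _ _ dQ dQ0) => //.
  case: bQ => del [d0 H]; exists del; split => // h hd f Bf; split => //.
  exact: (opB (H h hd)).
have E2 : Dn (fun _ => 1) = Dit DQ0 (Qt Rop v P 0) n.+1 (fun _ => 1).
  apply: (deriv_unique _ _ _ _ dn diter) => //.
  case: bQ => del [d0 H]; exists del; split => // h hd f Bf; split => //.
  exact: (opB (bop_iter n.+1 (H h hd))).
rewrite E2 Dit_one E1 /=; split => //.
by apply: mS; exact: S_iter.
Qed.

End Abstract.

End Ops.

Definition clamp {R : realType} (y : R) : R := Num.min (Num.max y (-1)) 1.

Lemma clamp_prop {R : realType} (y : R) :
  0 <= y * clamp y /\ (y * clamp y = 0 -> y = 0) /\ `|clamp y| <= 1.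
Proof.
have H : (y <= -1 /\ clamp y = -1) \/ (-1 <= y <= 1 /\ clamp y = y) \/ (1 <= y /\ clamp y = 1).
  rewrite /clamp maxEle; case: (leP y (-1)) => h1; rewrite minEle.
    by rewrite ifT; [left; split| lra].
  case: (leP y 1) => h2; first by right; left; split => //; apply/andP; split => //; lra.
  by right; right; split => //; lra.
case: H => [[h ->]|[[/andP[h1 h2] ->]|[h ->]]]; split; try split.
all: try (move=> /eqP; rewrite mulf_eq0 => /orP[/eqP //|/eqP]).
all: try lra; try nra; try (by rewrite ler_norml; lra).
all: by rewrite normrN normr1.
Qed.

Lemma Re_sub {R : realType} (z w : R[i]) : complex.Re (z - w) = complex.Re z - complex.Re w.
Proof. by case: z; case: w. Qed.
Lemma Im_sub {R : realType} (z w : R[i]) : complex.Im (z - w) = complex.Im z - complex.Im w.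
Proof. by case: z; case: w. Qed.

Section Meas.
Context {R : realType} {d : measure_display} {T : measurableType d}.
Variable mu : probability T R.

Lemma int_ae_bnd (g : T -> R) (M : R) : measurable_fun setT g ->
  {ae mu, forall x, `|g x| <= M} -> mu.-integrable setT (EFin \o g).
Proof.
move=> mg hM; apply/integrableP; split; first exact/measurable_EFinP.
apply: (@le_lt_trans _ _ (\int[mu]_(x in setT) (cst (Num.max M 0)%:E) x)%E).
  apply: ae_ge0_le_integral => //.
  - by apply: measurableT_comp => //; exact/measurable_EFinP.
  - by move=> x _ /=; rewrite lee_fin le_max lexx orbT.
  - apply: filterS hM => x hx _ /=; rewrite lee_fin le_max hx //.
rewrite integral_cst // [X in (_ * X)%E](_ : _ = 1%E); [by rewrite mule1 ltry| exact: probability_setT].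
Qed.


Lemma cint_B (f : T -> R[i]) M : cmeasurable f -> {ae mu, forall x, cabs (f x) <= M} ->
  cintegrable mu f.
Proof.
move=> [mRe mIm] hM; split.
  apply: (int_ae_bnd _ M) => //; apply: filterS hM => x hx.
  exact: le_trans (Re_le_cabs _) hx.
apply: (int_ae_bnd _ M) => //; apply: filterS hM => x hx.
exact: le_trans (Im_le_cabs _) hx.
Qed.

Lemma cint_sub (f g : T -> R[i]) : cintegrable mu f -> cintegrable mu g ->
  cint mu (fun x => f x - g x) = cint mu f - cint mu g.
Proof.
move=> [fR fI] [gR gI]; rewrite /cint.
under eq_Rintegral do rewrite Re_sub.
under [X in (_ +i* X)%C]eq_Rintegral do rewrite Im_sub.
rewrite (@RintegralB _ _ _ mu setT (fun x => complex.Re (f x)) (fun x => complex.Re (g x))) //.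
rewrite (@RintegralB _ _ _ mu setT (fun x => complex.Im (f x)) (fun x => complex.Im (g x))) //.
Qed.

Lemma Rint_comp (k : T -> R) (Tm : T -> T) : measure_preserving mu Tm ->
  measurable_fun setT k -> (forall x, `|k x| <= 1) ->
  Rintegral mu setT (fun x => k (Tm x)) = Rintegral mu setT k.
Proof.
move=> [mT hT] mk kb; rewrite /Rintegral; congr fine.
have mf : measurable_fun setT (EFin \o k) by exact/measurable_EFinP.
have intf : mu.-integrable (Tm @^-1` setT) ((EFin \o k) \o Tm).
  rewrite preimage_setT; apply: (int_ae_bnd _ 1).
    exact: measurableT_comp.
  by apply: aeW => x; exact: kb.
have := integral_pushforward mT mf intf measurableT.
rewrite preimage_setT => <-.
apply: eq_measure_integral => A mA _ /=.
by rewrite /pushforward hT.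
Qed.

Lemma ae_zero (w : T -> R) M : measurable_fun setT w -> {ae mu, forall x, `|w x| <= M} ->
  Rintegral mu setT (fun x => w x * clamp (w x)) = 0 -> {ae mu, forall x, w x = 0}.
Proof.
move=> mw hM h0.
have mc : measurable_fun setT (fun x => clamp (w x)).
  rewrite /clamp; apply: measurable_minr; last exact: measurable_cst.
  by apply: measurable_maxr => //; exact: measurable_cst.
have mh : measurable_fun setT (fun x => w x * clamp (w x)) by exact: measurable_funM.
have ih : mu.-integrable setT (EFin \o (fun x => w x * clamp (w x))).
  apply: (int_ae_bnd _ M) => //; apply: filterS hM => x hx.
  have [_ [_ c1]] := clamp_prop (w x).
  rewrite normrM; apply: le_trans hx; rewrite -{2}(mulr1 `|w x|).
  by apply: ler_wpM2l.
have fin := integrable_fin_num measurableT ih.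
pose hf := fun x => w x * clamp (w x).
have h0' : (\int[mu]_(x in setT) (EFin \o hf) x = 0)%E.
  move: h0; rewrite /Rintegral => h0.
  by rewrite -(fineK fin) /= h0.
have mE : measurable_fun setT (EFin \o (fun x => w x * clamp (w x))) by exact/measurable_EFinP.
have := (ae_eq_integral_abs mu measurableT mE).1.
have -> : (\int[mu]_(x in setT) `|(EFin \o hf) x|)%E =
   (\int[mu]_(x in setT) (EFin \o hf) x)%E.
  apply: eq_integral => x _ /=; rewrite /hf ger0_norm //.
  by have [] := clamp_prop (w x).
move=> /(_ h0'); apply: filterS => x /(_ I) /= [] hx.
by have [_ [+ _]] := clamp_prop (w x); apply.
Qed.

End Meas.

Lemma ReMr {R : realType} (z : R[i]) (r : R) : complex.Re (z * (r%:C)%C) = complex.Re z * r.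
Proof. by case: z => a b /=; rewrite !mulr0 subr0. Qed.
Lemma ImMr {R : realType} (z : R[i]) (r : R) : complex.Im (z * (r%:C)%C) = complex.Im z * r.
Proof. by case: z => a b /=; rewrite !mulr0 add0r. Qed.

Lemma Rop_one {R : realType} {d : measure_display} {T : measurableType d}
  (mu : probability T R) (Tm : T -> T) (B : set (T -> R[i])) (nrm : (T -> R[i]) -> R)
  (Rop : (T -> R[i]) -> (T -> R[i])) :
  measure_preserving mu Tm -> transfer_op mu Tm Rop ->
  (forall f g, B f -> B g -> B (fun x => f x - g x)) -> (forall c : R[i], B (fun _ => c)) ->
  (forall f, B f -> cmeasurable f /\ {ae mu, forall x, cabs (f x) <= nrm f}) ->
  (forall f, B f -> {ae mu, forall x, f x = 0} -> f = (fun _ => 0)) ->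
  B (Rop (fun _ => 1)) ->
  Rop (fun _ => 1) = (fun _ => 1).
Proof.
move=> mp [_ tr] BBs Bc Hm Hz Bu.
set u := Rop (fun _ => 1).
have Bw : B (fun x => u x - 1) by apply: BBs.
have [[mRw mIw] aw] := Hm _ Bw.
have [[mRu mIu] au] := Hm _ Bu.
have i1 : cintegrable mu (fun _ : T => (1 : R[i])).
  apply: (cint_B _ 1); first by split; exact: measurable_cst.
  by apply: aeW => x; rewrite cabs1.
have key : forall k : T -> R, measurable_fun setT k -> (forall x, `|k x| <= 1) ->
    cint mu (fun x => u x * ((k x)%:C)%C) = cint mu (fun x => 1 * ((k (Tm x))%:C)%C).
  move=> k mk kb; apply: tr => //.
  by exists 1 => x; rewrite cabs_real.
apply: fun_eq0; apply: Hz => //.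
have hR : {ae mu, forall x, complex.Re (u x - 1) = 0}.
  apply: (ae_zero _ _ (nrm (fun x => u x - 1))) => //.
    by apply: filterS aw => x hx; apply: le_trans (Re_le_cabs _) hx.
  set k := fun x => clamp (complex.Re (u x - 1)).
  have mk : measurable_fun setT k.
    rewrite /k /clamp; apply: measurable_minr; last exact: measurable_cst.
    by apply: measurable_maxr => //; exact: measurable_cst.
  have kb : forall x, `|k x| <= 1 by move=> x; have [_ []] := clamp_prop (complex.Re (u x - 1)).
  have := congr1 (@complex.Re R) (key k mk kb); rewrite /cint /=.
  under eq_Rintegral do rewrite ReMr.
  under [X in _ = X -> _]eq_Rintegral do rewrite mulr0 subr0 mul1r.
  rewrite (Rint_comp _ _ _ mp mk kb) => E.
  have -> : Rintegral mu setT (fun x => complex.Re (u x - 1) * clamp (complex.Re (u x - 1))) =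
     Rintegral mu setT (fun x => complex.Re (u x) * k x) - Rintegral mu setT (fun x => k x).
    rewrite -RintegralB //.
    - by apply: eq_Rintegral => x _; rewrite /k Re_sub /=; ring.
    - apply: (int_ae_bnd _ _ (nrm u)); first exact: measurable_funM.
      apply: filterS au => x hx; rewrite normrM.
      apply: le_trans (_ : `|complex.Re (u x)| * 1 <= _).
        by apply: ler_wpM2l.
      by rewrite mulr1; exact: le_trans (Re_le_cabs _) hx.
    - by apply: (int_ae_bnd _ _ 1) => //; exact: aeW.
  by rewrite E subrr.
have hI : {ae mu, forall x, complex.Im (u x - 1) = 0}.
  apply: (ae_zero _ _ (nrm (fun x => u x - 1))) => //.
    by apply: filterS aw => x hx; apply: le_trans (Im_le_cabs _) hx.
  set k := fun x => clamp (complex.Im (u x - 1)).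
  have mk : measurable_fun setT k.
    rewrite /k /clamp; apply: measurable_minr; last exact: measurable_cst.
    by apply: measurable_maxr => //; exact: measurable_cst.
  have kb : forall x, `|k x| <= 1 by move=> x; have [_ []] := clamp_prop (complex.Im (u x - 1)).
  have := congr1 (@complex.Im R) (key k mk kb); rewrite /cint /=.
  under eq_Rintegral do rewrite ImMr.
  under [X in _ = X -> _]eq_Rintegral do rewrite mulr0 mul0r addr0.
  rewrite Rintegral_cst // mul0r => E.
  by rewrite -E; apply: eq_Rintegral => x _; rewrite /k Im_sub /= subr0.
apply: filterS2 hR hI => x; case: (u x - 1) => a b /= -> ->.
by [].
Qed.
Theorem lemma3p9 (R : realType) (d : measure_display) (Omega : measurableType d)
    (mu : probability Omega R) (Tm : Omega -> Omega) (v : Omega -> R)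
    (alpha : R) (ell : R -> R) (p q : R)
    (B : set (Omega -> R[i])) (nrm : (Omega -> R[i]) -> R)
    (Rop : (Omega -> R[i]) -> (Omega -> R[i]))
    (R' : R -> (Omega -> R[i]) -> (Omega -> R[i]))
    (lam : R -> R[i]) (P : R -> (Omega -> R[i]) -> (Omega -> R[i])) :
  measure_preserving mu Tm ->
  measurable_fun setT v ->
  (\int[mu]_x ((v x) ^+ 2)%:E = +oo)%E ->
  mu.-integrable setT (fun x => (v x)%:E) ->
  Rintegral mu setT v = 0 ->
  1 < alpha <= 2 ->
  slowly_varying ell ->
  H1 mu v alpha ell p q ->
  transfer_op mu Tm Rop ->
  banach_in_Linfty mu B nrm ->
  H2 B nrm Rop v alpha ell R' ->
  H3 B nrm Rop ->
  eig_family B nrm Rop v lam P ->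
  (exists DP, op_deriv B nrm P 0 DP) ->
  (forall DP, op_deriv B nrm P 0 DP -> cint mu (DP (fun _ => 1)) = 0) /\
  (forall n : nat, (1 <= n)%N ->
     (exists DQ, op_deriv B nrm (Qt Rop v P) 0 DQ) /\
     (exists Dn, op_deriv B nrm (fun t => iter n (Qt Rop v P t)) 0 Dn) /\
     (forall DQ Dn, op_deriv B nrm (Qt Rop v P) 0 DQ ->
        op_deriv B nrm (fun t => iter n (Qt Rop v P t)) 0 Dn ->
        cint mu (Dn (fun _ => 1))
          = cint mu (iter n.-1 (Qt Rop v P 0) (DQ (fun _ => 1))) /\
        cint mu (iter n.-1 (Qt Rop v P 0) (DQ (fun _ => 1))) = 0)).
Proof.
Proof.
move=> mp mv v2 vint v0 halpha slow h1 tr ban hH2 hH3 eig [DP0 dP0].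
case: ban => [Bcomb [Bcst [nge0 [neq0 [ntri [nscale [_ [Hm Hz]]]]]]]].
have Rt0 : Rt Rop v 0 = Rop.
  apply/funext => f; rewrite /Rt; congr Rop; apply/funext => x.
  by rewrite mul0r cexpi0 mul1r.
case/andP: halpha => a1 a2.
have ha' : 1 < (1 + alpha) / 2 < alpha by apply/andP; split; lra.
have [eps1 [C [e0 [C0 H]]]] := hH2 _ ha'.
have hR : exists eps, 0 < eps /\ forall t, `|t| < eps -> bounded_op B nrm (Rt Rop v t).
  exists eps1; split => // t ht.
  by case: (H t 0 ht ltac:(by rewrite normr0)).
have dR : op_deriv B nrm (Rt Rop v) 0 (R' 0).
  by case: (H 0 0 ltac:(by rewrite normr0) ltac:(by rewrite normr0)) => _ [_ [_ [_ [+ _]]]].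
have bR0 : bounded_op B nrm (Rt Rop v 0).
  by case: hR => e [e0' HH]; apply: HH; rewrite normr0.
case: eig => del [d0 [lam0 [hs _]]].
have hP : exists del, 0 < del /\ forall t, `|t| < del ->
    bounded_op B nrm (P t) /\ (forall f, B f -> P t (P t f) = P t f).
  exists del; split => // t ht.
  by case: (hs t ht) => bP [idem _].
have [_ [_ [_ [comm [eigen nspec]]]]] := hs 0 ltac:(by rewrite normr0).
rewrite lam0 in eigen nspec.
have BBs : forall f g, B f -> B g -> B (fun x => f x - g x).
  move=> f g Bf Bg; have := Bcomb g f (-1) Bg Bf.
  have -> : (fun x => -1 * g x + f x) = (fun x => f x - g x) by apply/funext => x; ring.
  by [].
have Bu : B (Rop (fun _ => 1)).
  rewrite -Rt0; case: bR0 => + _; apply; exact: Bcst.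
have one : Rt Rop v 0 (fun _ => 1) = (fun _ => 1).
  rewrite Rt0; exact: (Rop_one _ _ _ _ _ mp tr BBs Bcst Hm Hz Bu).
have cintB : forall f, B f -> cintegrable mu f.
  by move=> f Bf; case: (Hm f Bf) => cm ae; exact: (cint_B mu f (nrm f) cm ae).
have mlin : forall f g, B f -> B g -> cint mu (fun x => f x - g x) = cint mu f - cint mu g.
  by move=> f g Bf Bg; apply: cint_sub; apply: cintB.
have minv : forall f, B f -> cint mu (Rt Rop v 0 f) = cint mu f.
  move=> f Bf; rewrite Rt0.
  have := (tr.2 f (fun _ => 1) (cintB f Bf)).
  have -> : (fun x => Rop f x * 1) = Rop f by apply/funext => x; rewrite mulr1.
  have -> : (fun x => f x * 1) = f by apply/funext => x; rewrite mulr1.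
  apply.
    by split; exact: measurable_cst.
  by exists 1 => x; rewrite cabs1.
exact: (@abstract_main _ _ _ B nrm Bcomb Bcst nge0 neq0 ntri nscale Rop v P R' DP0 (cint mu) hR dR hP dP0 comm eigen nspec one mlin minv).
Qed.
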